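(* In the setting below, if for some numbers $q_1,\dots,q_I$ one has $N_i^k/N^k\to q_i$ as $k\to\infty$ for every $1\le i\le I$, then $\nu_i^n/n\to q_i$ as $n\to\infty$ for every $1\le i\le I$. In particular, if the $N_i^k$ are random and $N_i^k/N^k\to q_i^*$ almost surely for all $i$, then $\nu_i^n/n\to q_i^*$ almost surely for all $i$.
   Context: Let $I\ge1$, let $0=N^0<N^1<N^2<\cdots$ be integers, and let $N_i^k$ ($1\le i\le I$, $k\ge0$) be nonnegative integers with $N_i^0=0$, $N_i^k\ge N_i^{k-1}$ and $\sum_{i=1}^IN_i^k=N^k$ for all $k$. For $k\ge1$ put $r_i^k=\frac{N_i^k-N_i^{k-1}}{N^k-N^{k-1}}$. Define integers $\nu_i^n$ ($n\ge0$) recursively: $\nu_i^0=0$ for all $i$; for $n\ge1$, with $k$ the unique integer such that $N^{k-1}<n\le N^k$, let $i_n$ be an index maximizing $r_i^k-\frac{\nu_i^{n-1}-N_i^{k-1}}{n-N^{k-1}}$ over $1\le i\le I$ (ties broken by choosing the largest $r_i^k$, and if still tied the largest $i$), and set $\nu_{i_n}^n=\nu_{i_n}^{n-1}+1$, $\nu_i^n=\nu_i^{n-1}$ for $i\ne i_n$. *)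

(* Defs.v *)
From Stdlib Require Import Reals Arith List.
Open Scope R_scope.

(* Indices i range over 0..I-1 (shift of the paper's 1..I).
   N k = N^k, Ni i k = N_i^k. *)

Fixpoint find_k (N : nat -> nat) (n fuel k : nat) : nat :=
  match fuel with
  | O => k
  | S f => if Nat.leb n (N k) then k else find_k N n f (S k)
  end.

(* For n >= 1 (and N 0 = 0, N strictly increasing) this is the unique k
   with N (k-1) < n <= N k. *)
Definition kof (N : nat -> nat) (n : nat) : nat := find_k N n (S n) 0.

Definition rik (N : nat -> nat) (Ni : nat -> nat -> nat) (i k : nat) : R :=
  (INR (Ni i k) - INR (Ni i (k - 1)%nat)) / (INR (N k) - INR (N (k - 1)%nat)).

(* the quantity maximized at step n, given nu^{n-1} = nuprev *)
Definition score (N : nat -> nat) (Ni : nat -> nat -> nat)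
  (nuprev : nat -> nat) (n k i : nat) : R :=
  rik N Ni i k - (INR (nuprev i) - INR (Ni i (k - 1)%nat)) / (INR n - INR (N (k - 1)%nat)).

(* j (processed after best, so j > best) beats best iff its score is larger,
   or equal score and larger r, or both equal (then j has larger index). *)
Definition beats (s r : nat -> R) (j best : nat) : bool :=
  if Rlt_dec (s best) (s j) then true
  else if Req_EM_T (s best) (s j) then
         (if Rlt_dec (r best) (r j) then true
          else if Req_EM_T (r best) (r j) then true else false)
       else false.

Fixpoint argmax (s r : nat -> R) (m : nat) : nat :=
  match m with
  | O => O
  | S m' => let b := argmax s r m' in if beats s r m b then m else b
  end.

Definition chosen (I : nat) (N : nat -> nat) (Ni : nat -> nat -> nat)
  (nuprev : nat -> nat) (n : nat) : nat :=
  let k := kof N n in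
  argmax (score N Ni nuprev n k) (fun i => rik N Ni i k) (I - 1).

Fixpoint nu (I : nat) (N : nat -> nat) (Ni : nat -> nat -> nat) (n : nat)
  : nat -> nat :=
  match n with
  | O => fun _ => O
  | S m =>
      let prev := nu I N Ni m in
      let j := chosen I N Ni prev (S m) in
      fun i => if Nat.eqb i j then S (prev i) else prev i
  end.

(* Main.v *)
Require Import Defs.
From Stdlib Require Import Reals Arith List Lra Lia.
Open Scope R_scope.

Fixpoint sR (f : nat -> R) (m : nat) : R :=
  match m with O => 0 | S m' => sR f m' + f m' end.
Fixpoint sN (f : nat -> nat) (m : nat) : nat :=
  match m with O => O | S m' => (sN f m' + f m')%nat end.

Lemma fold_add_shift l a : fold_right Nat.add a l = (a + fold_right Nat.add 0 l)%nat.
Proof. induction l; simpl; lia. Qed.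

Lemma fold_sN f m : fold_right Nat.add 0%nat (map f (seq 0 m)) = sN f m.
Proof.
  induction m; auto. rewrite seq_S, map_app, fold_right_app. simpl.
  rewrite fold_add_shift, IHm. lia.
Qed.

Lemma sR_INR f m : sR (fun i => INR (f i)) m = INR (sN f m).
Proof. induction m; cbn [sR sN]; auto. rewrite plus_INR; lra. Qed.

Lemma sR_ext f g m : (forall i, (i < m)%nat -> f i = g i) -> sR f m = sR g m.
Proof. induction m; intros H; cbn [sR]; auto. rewrite IHm, H; auto. Qed.

Lemma sR_minus f g m : sR (fun i => f i - g i) m = sR f m - sR g m.
Proof. induction m; cbn [sR]; [lra|]. rewrite IHm; lra. Qed.

Lemma sR_div f c m : sR (fun i => f i / c) m = sR f m / c.
Proof. induction m; cbn [sR]; unfold Rdiv in *; [ring|]. rewrite IHm; ring. Qed.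

Lemma sR_mul f c m : sR (fun i => f i * c) m = sR f m * c.
Proof. induction m; cbn [sR]; [ring|]. rewrite IHm; ring. Qed.

Lemma sR_le f g m : (forall i, (i<m)%nat -> f i <= g i) -> sR f m <= sR g m.
Proof. induction m; intros H; cbn [sR]; [lra|].
  assert (sR f m <= sR g m) by auto. assert (f m <= g m) by auto. lra. Qed.

Lemma sR_one m : sR (fun _ => 1) m = INR m.
Proof. induction m; cbn [sR]; [simpl; lra|]. rewrite IHm, S_INR; lra. Qed.

Lemma sR_bound1 f m i : (forall j, (j<m)%nat -> f j <= 1) -> (i<m)%nat ->
  sR f m <= f i + (INR m - 1).
Proof.
  induction m; intros H Hi; [lia|]. cbn [sR]. rewrite S_INR.
  destruct (Nat.eq_dec i m).
  - subst. assert (sR f m <= sR (fun _ => 1) m) by (apply sR_le; auto).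
    rewrite sR_one in H0. lra.
  - assert (sR f m <= f i + (INR m - 1)) by (apply IHm; auto; lia).
    assert (f m <= 1) by auto. lra.
Qed.

Lemma sN_ind_add g j m : (j < m)%nat ->
  sN (fun i => if Nat.eqb i j then S (g i) else g i) m = S (sN g m).
Proof.
  induction m; intros H; [lia|]. cbn [sN].
  destruct (Nat.eq_dec j m).
  - subst. rewrite Nat.eqb_refl.
    assert (sN (fun i => if Nat.eqb i m then S (g i) else g i) m = sN g m).
    { clear IHm H. assert (forall m', (m' <= m)%nat ->
        sN (fun i => if Nat.eqb i m then S (g i) else g i) m' = sN g m').
      { induction m'; intros; cbn [sN]; auto.
        rewrite IHm' by lia. destruct (Nat.eqb_spec m' m); [lia|auto]. }
      auto. }
    lia.
  - rewrite IHm by lia. destruct (Nat.eqb_spec m j); [lia|]. lia.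
Qed.

Lemma sN_le f g m : (forall i, (i<m)%nat -> (f i <= g i)%nat) -> (sN f m <= sN g m)%nat.
Proof. induction m; intros H; cbn [sN]; auto. specialize (IHm (fun i h => H i ltac:(lia))).
  specialize (H m ltac:(lia)). lia. Qed.

Lemma sN_eq f g m : (forall i, (i<m)%nat -> (f i <= g i)%nat) -> sN f m = sN g m ->
  forall i, (i<m)%nat -> f i = g i.
Proof.
  induction m; intros H E i Hi; [lia|]. cbn [sN] in E.
  assert (A := sN_le f g m (fun i h => H i ltac:(lia))).
  assert (B := H m ltac:(lia)).
  destruct (Nat.eq_dec i m). subst; lia.
  apply IHm; auto; lia.
Qed.

Lemma Nlt (N : nat -> nat) (h : forall k, (N k < N (S k))%nat) :
  forall i j, (i < j)%nat -> (N i < N j)%nat.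
Proof. intros i j; induction j; intros H; [lia|].
  destruct (Nat.eq_dec i j). subst; auto. specialize (h j). specialize (IHj ltac:(lia)). lia. Qed.

Lemma Nle (N : nat -> nat) (h : forall k, (N k < N (S k))%nat) :
  forall i j, (i <= j)%nat -> (N i <= N j)%nat.
Proof. intros i j H. destruct (Nat.eq_dec i j). subst; lia.
  assert (N i < N j)%nat by (apply Nlt; auto; lia). lia. Qed.

Lemma Nge (N : nat -> nat) (h : forall k, (N k < N (S k))%nat) : forall k, (k <= N k)%nat.
Proof. induction k; [lia|]. specialize (h k). lia. Qed.

Lemma find_k_spec N n : forall fuel k, (n <= N (k + fuel))%nat ->
  (k = 0%nat \/ (N (k-1) < n)%nat) ->
  let r := find_k N n fuel k in (n <= N r)%nat /\ (r = 0%nat \/ (N (r-1) < n)%nat).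
Proof.
  induction fuel; intros k H1 H2; simpl.
  - rewrite Nat.add_0_r in H1; auto.
  - destruct (Nat.leb_spec n (N k)). auto.
    apply IHfuel. replace (S k + fuel)%nat with (k + S fuel)%nat by lia; auto.
    right. replace (S k - 1)%nat with k by lia. auto.
Qed.

Lemma kof_spec N (hN0 : N 0%nat = 0%nat) (h : forall k, (N k < N (S k))%nat) n :
  (1 <= n)%nat -> (1 <= kof N n)%nat /\ (N (kof N n - 1) < n)%nat /\ (n <= N (kof N n))%nat.
Proof.
  intros Hn. unfold kof.
  destruct (find_k_spec N n (S n) 0) as [A B].
  - simpl. assert (S n <= N (S n))%nat by (apply Nge; auto). lia.
  - auto.
  - destruct B as [B|B].
    + rewrite B, hN0 in A. lia.
    + split; [|split]; auto.
      destruct (find_k N n (S n) 0); [|lia]. simpl in B. lia.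
Qed.

Lemma kof_unique N (hN0 : N 0%nat = 0%nat) (h : forall k, (N k < N (S k))%nat) n k :
  (1 <= k)%nat -> (N (k-1) < n)%nat -> (n <= N k)%nat -> kof N n = k.
Proof.
  intros Hk H1 H2. destruct (kof_spec N hN0 h n) as [A [B C]]; [lia|].
  set (r := kof N n) in *.
  destruct (lt_eq_lt_dec r k) as [[L|L]|L]; auto.
  - assert (N r <= N (k-1))%nat by (apply Nle; auto; lia). lia.
  - assert (N k <= N (r-1))%nat by (apply Nle; auto; lia). lia.
Qed.

Lemma argmax_spec s r m : (argmax s r m <= m)%nat /\
  forall j, (j <= m)%nat -> s j <= s (argmax s r m).
Proof.
  induction m; simpl.
  - split; auto. intros j Hj. replace j with 0%nat by lia. lra.
  - destruct IHm as [A B]. set (b := argmax s r m) in *.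
    unfold beats.
    destruct (Rlt_dec (s b) (s (S m))).
    + split; auto. intros j Hj. destruct (Nat.eq_dec j (S m)). subst; lra.
      assert (s j <= s b) by (apply B; lia). lra.
    + destruct (Req_EM_T (s b) (s (S m))).
      * assert (Hb: forall j, (j <= S m)%nat -> s j <= s (S m)).
        { intros j Hj. destruct (Nat.eq_dec j (S m)). subst; lra.
          assert (s j <= s b) by (apply B; lia). lra. }
        destruct (Rlt_dec (r b) (r (S m))); [split; auto|].
        destruct (Req_EM_T (r b) (r (S m))); [split; auto|].
        split; [lia|]. intros j Hj. rewrite e. apply Hb; auto.
      * split; [lia|]. intros j Hj. destruct (Nat.eq_dec j (S m)). subst; lra.
        apply B; lia.
Qed.

Lemma nu_S I N Ni m i : nu I N Ni (S m) i =
  (if Nat.eqb i (chosen I N Ni (nu I N Ni m) (S m)) then S (nu I N Ni m i) else nu I N Ni m i).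
Proof. reflexivity. Qed.

Lemma chosen_spec I N Ni prev n : (1 <= I)%nat ->
  (chosen I N Ni prev n < I)%nat /\
  forall i, (i < I)%nat -> score N Ni prev n (kof N n) i <= score N Ni prev n (kof N n) (chosen I N Ni prev n).
Proof.
  intros hI. unfold chosen.
  destruct (argmax_spec (score N Ni prev n (kof N n)) (fun i => rik N Ni i (kof N n)) (I-1)) as [A B].
  split; [lia|]. intros i Hi. apply B. lia.
Qed.

Lemma nu_sum I N Ni (hI : (1 <= I)%nat) n : sN (nu I N Ni n) I = n.
Proof.
  induction n.
  - simpl. clear hI. induction I; cbn [sN]; auto. rewrite IHI; reflexivity.
  - destruct (chosen_spec I N Ni (nu I N Ni n) (S n) hI) as [A _].
    transitivity (sN (fun i => if Nat.eqb i (chosen I N Ni (nu I N Ni n) (S n)) then S (nu I N Ni n i) else nu I N Ni n i) I).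
    + reflexivity.
    + rewrite sN_ind_add; auto.
Qed.

Lemma sum_c I N Ni (hI : (1 <= I)%nat)
  (hsum : forall k, fold_right Nat.add 0%nat (map (fun i => Ni i k) (seq 0 I)) = N k) k t :
  sR (fun i => INR (nu I N Ni (N k + t) i) - INR (Ni i k)) I = INR t.
Proof.
  rewrite sR_minus, sR_INR, sR_INR, nu_sum by auto.
  rewrite <- fold_sN, hsum, plus_INR. lra.
Qed.

Lemma sum_r I N Ni
  (hNinc : forall k, (N k < N (S k))%nat)
  (hsum : forall k, fold_right Nat.add 0%nat (map (fun i => Ni i k) (seq 0 I)) = N k) k :
  sR (fun i => rik N Ni i (S k)) I = 1.
Proof.
  unfold rik. replace (S k - 1)%nat with k by lia.
  rewrite sR_div, sR_minus, sR_INR, sR_INR, <- !fold_sN, !hsum.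
  assert (INR (N k) < INR (N (S k))) by (apply lt_INR; auto).
  field. lra.
Qed.

Lemma rik_nonneg N Ni (hNinc : forall k, (N k < N (S k))%nat) i k
  (h : (Ni i k <= Ni i (S k))%nat) : 0 <= rik N Ni i (S k).
Proof.
  unfold rik. replace (S k - 1)%nat with k by lia.
  apply le_INR in h. assert (INR (N k) < INR (N (S k))) by (apply lt_INR; auto).
  apply Rmult_le_pos. lra. left. apply Rinv_0_lt_compat. lra.
Qed.

Lemma block I N Ni (hI : (1 <= I)%nat) (hN0 : N 0%nat = 0%nat)
  (hNinc : forall k, (N k < N (S k))%nat)
  (hNimon : forall i k, (i < I)%nat -> (Ni i k <= Ni i (S k))%nat)
  (hsum : forall k, fold_right Nat.add 0%nat (map (fun i => Ni i k) (seq 0 I)) = N k)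
  k (Hk : forall i, (i < I)%nat -> nu I N Ni (N k) i = Ni i k) :
  forall t, (t <= N (S k) - N k)%nat -> forall i, (i < I)%nat ->
  INR (nu I N Ni (N k + t) i) - INR (Ni i k) < rik N Ni i (S k) * INR t + 1.
Proof.
  induction t; intros Ht i Hi.
  - rewrite Nat.add_0_r, Hk by auto. simpl. lra.
  - specialize (IHt ltac:(lia)).
    rewrite Nat.add_succ_r, nu_S.
    set (prev := nu I N Ni (N k + t)) in *.
    assert (Kof : kof N (S (N k + t)) = S k).
    { apply kof_unique; auto; try lia. replace (S k - 1)%nat with k by lia. lia. }
    destruct (chosen_spec I N Ni prev (S (N k + t)) hI) as [Jlt Jmax].
    rewrite Kof in Jmax.
    set (j := chosen I N Ni prev (S (N k + t))) in *.
    assert (Escore : forall i, score N Ni prev (S (N k + t)) (S k) i =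
       rik N Ni i (S k) - (INR (prev i) - INR (Ni i k)) / (INR t + 1)).
    { intros i'. unfold score. replace (S k - 1)%nat with k by lia.
      rewrite S_INR, plus_INR. f_equal. f_equal. ring. }
    assert (Hpos : 0 < score N Ni prev (S (N k + t)) (S k) j).
    { destruct (Rlt_le_dec 0 (score N Ni prev (S (N k + t)) (S k) j)) as [p|p]; auto.
      exfalso.
      assert (sR (score N Ni prev (S (N k + t)) (S k)) I <= sR (fun _ => 0) I).
      { apply sR_le. intros i' Hi'. specialize (Jmax i' Hi'). lra. }
      assert (Z : sR (fun _ => 0) I = 0) by (clear; induction I; cbn [sR]; lra).
      rewrite Z in H.
      rewrite (sR_ext _ (fun i => rik N Ni i (S k) - (INR (prev i) - INR (Ni i k)) / (INR t + 1)))
        in H by (intros; apply Escore).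
      rewrite sR_minus, sR_div, sum_r in H by auto.
      unfold prev in H. rewrite sum_c in H by auto.
      assert (0 <= INR t) by apply pos_INR.
      assert (INR t / (INR t + 1) < 1).
      { apply (Rmult_lt_reg_r (INR t + 1)). lra. unfold Rdiv. rewrite Rmult_assoc, Rinv_l by lra. lra. }
      lra. }
    rewrite Escore in Hpos.
    assert (0 <= INR t) by apply pos_INR.
    destruct (Nat.eqb_spec i j).
    + subst i. rewrite !S_INR.
      set (c := INR (prev j) - INR (Ni j k)) in *.
      assert (c = c / (INR t + 1) * (INR t + 1)) by (field; lra).
      set (x := c / (INR t + 1)) in *.
      set (r := rik N Ni j (S k)) in *.
      assert (c < r * (INR t + 1)) by nra. unfold c in *. lra.
    + rewrite S_INR.
      assert (0 <= rik N Ni i (S k)) by (apply rik_nonneg; auto).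
      rewrite Rmult_plus_distr_l, Rmult_1_r. specialize (IHt i Hi). lra.
Qed.

Lemma interp a a' b T t c q e1 E e2 : 0 < b -> 0 < T -> 0 <= t <= T ->
  Rabs (a/b - q) < e1 -> Rabs (a'/(b+T) - q) < e1 ->
  - E <= c - a - (a'-a)/T * t <= E -> E/(b+t) < e2 ->
  Rabs (c/(b+t) - q) < e1 + e2.
Proof.
  intros Hb HT Ht Hu Hv Hc He.
  assert (Ea : a = (a/b) * b) by (field; lra).
  assert (Ea' : a' = (a'/(b+T)) * (b+T)) by (field; lra).
  set (u := a/b) in *. set (v := a'/(b+T)) in *.
  apply Rabs_def2 in Hu. apply Rabs_def2 in Hv.
  set (Y := a + (a'-a)/T * t - q*(b+t)).
  assert (EY : Y * T = ((T-t)*b) * (u-q) + (t*(b+T)) * (v-q)).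
  { unfold Y, u, v. field. lra. }
  assert (P1 : 0 <= (T-t)*b) by nra.
  assert (P2 : 0 <= t*(b+T)) by nra.
  assert (B1 : ((T-t)*b) * (u-q) <= ((T-t)*b) * e1) by (apply Rmult_le_compat_l; lra).
  assert (B2 : (t*(b+T)) * (v-q) <= (t*(b+T)) * e1) by (apply Rmult_le_compat_l; lra).
  assert (B3 : ((T-t)*b) * (-e1) <= ((T-t)*b) * (u-q)) by (apply Rmult_le_compat_l; lra).
  assert (B4 : (t*(b+T)) * (-e1) <= (t*(b+T)) * (v-q)) by (apply Rmult_le_compat_l; lra).
  assert (YT : - (e1 * (b+t)) * T <= Y * T <= (e1 * (b+t)) * T) by (split; nra).
  assert (YB : - (e1 * (b+t)) <= Y <= e1 * (b+t)).
  { destruct YT; split; apply (Rmult_le_reg_r T); auto. }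
  assert (Ec : c/(b+t) - q = (c - a - (a'-a)/T * t)/(b+t) + Y/(b+t)) by (unfold Y; field; lra).
  rewrite Ec.
  assert (Hbt : 0 < b + t) by lra.
  assert (Z1 : Y / (b+t) <= e1 /\ - e1 <= Y/(b+t)).
  { split; apply (Rmult_le_reg_r (b+t)); auto; unfold Rdiv; rewrite Rmult_assoc, Rinv_l by lra; lra. }
  assert (Z2 : (c - a - (a'-a)/T * t)/(b+t) <= E/(b+t) /\ -(E/(b+t)) <= (c - a - (a'-a)/T * t)/(b+t)).
  { unfold Rdiv. assert (0 < /(b+t)) by (apply Rinv_0_lt_compat; lra). split; nra. }
  apply Rabs_def1; lra.
Qed.

Lemma rik_T N Ni (hNinc : forall k, (N k < N (S k))%nat) i k :
  rik N Ni i (S k) * (INR (N (S k)) - INR (N k)) = INR (Ni i (S k)) - INR (Ni i k).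
Proof.
  unfold rik. replace (S k - 1)%nat with k by lia.
  assert (INR (N k) < INR (N (S k))) by (apply lt_INR; auto). field. lra.
Qed.

Lemma nu_at I N Ni (hI : (1 <= I)%nat) (hN0 : N 0%nat = 0%nat)
  (hNinc : forall k, (N k < N (S k))%nat)
  (hNi0 : forall i, (i < I)%nat -> Ni i 0%nat = 0%nat)
  (hNimon : forall i k, (i < I)%nat -> (Ni i k <= Ni i (S k))%nat)
  (hsum : forall k, fold_right Nat.add 0%nat (map (fun i => Ni i k) (seq 0 I)) = N k) :
  forall k i, (i < I)%nat -> nu I N Ni (N k) i = Ni i k.
Proof.
  induction k; intros i Hi.
  - rewrite hN0, hNi0; auto.
  - assert (Hb := block I N Ni hI hN0 hNinc hNimon hsum k IHk (N (S k) - N k) ltac:(lia)).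
    assert (EN : (N k + (N (S k) - N k))%nat = N (S k)) by (specialize (hNinc k); lia).
    rewrite EN in Hb.
    assert (Hle : forall i, (i < I)%nat -> (nu I N Ni (N (S k)) i <= Ni i (S k))%nat).
    { intros i' Hi'. specialize (Hb i' Hi').
      rewrite minus_INR in Hb by (specialize (hNinc k); lia).
      rewrite rik_T in Hb by auto.
      assert (INR (nu I N Ni (N (S k)) i') < INR (Ni i' (S k) + 1)) by (rewrite plus_INR; simpl; lra).
      apply INR_lt in H. lia. }
    apply (sN_eq _ (fun i => Ni i (S k)) I); auto.
    rewrite nu_sum, <- fold_sN, hsum; auto.
Qed.

Lemma blockbound I N Ni (hI : (1 <= I)%nat) (hN0 : N 0%nat = 0%nat)
  (hNinc : forall k, (N k < N (S k))%nat)
  (hNi0 : forall i, (i < I)%nat -> Ni i 0%nat = 0%nat)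
  (hNimon : forall i k, (i < I)%nat -> (Ni i k <= Ni i (S k))%nat)
  (hsum : forall k, fold_right Nat.add 0%nat (map (fun i => Ni i k) (seq 0 I)) = N k)
  k t i : (t <= N (S k) - N k)%nat -> (i < I)%nat ->
  - INR I <= INR (nu I N Ni (N k + t) i) - INR (Ni i k) - rik N Ni i (S k) * INR t <= INR I.
Proof.
  intros Ht Hi.
  assert (Hk := nu_at I N Ni hI hN0 hNinc hNi0 hNimon hsum k).
  assert (Hb := block I N Ni hI hN0 hNinc hNimon hsum k Hk t Ht).
  set (f := fun i => INR (nu I N Ni (N k + t) i) - INR (Ni i k) - rik N Ni i (S k) * INR t).
  assert (Sf : sR f I = 0).
  { unfold f. rewrite sR_minus, sum_c, sR_mul, sum_r by auto. ring. }
  assert (Hf1 : forall j, (j < I)%nat -> f j <= 1).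
  { intros j Hj. unfold f. specialize (Hb j Hj). lra. }
  assert (L := sR_bound1 f I i Hf1 Hi).
  assert (1 <= INR I) by (apply (le_INR 1); auto).
  specialize (Hf1 i Hi). unfold f in *. lra.
Qed.

Theorem lemma2p6 (I : nat) (N : nat -> nat) (Ni : nat -> nat -> nat)
  (q : nat -> R)
  (hI : (1 <= I)%nat)
  (hN0 : N 0%nat = 0%nat)
  (hNinc : forall k, (N k < N (S k))%nat)
  (hNi0 : forall i, (i < I)%nat -> Ni i 0%nat = 0%nat)
  (hNimon : forall i k, (i < I)%nat -> (Ni i k <= Ni i (S k))%nat)
  (hsum : forall k, fold_right Nat.add 0%nat (map (fun i => Ni i k) (seq 0 I)) = N k)
  (hlim : forall i, (i < I)%nat -> Un_cv (fun k => INR (Ni i k) / INR (N k)) (q i)) :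
  forall i, (i < I)%nat -> Un_cv (fun n => INR (nu I N Ni n i) / INR n) (q i).
Proof.
  intros i hi eps Heps.
  destruct (hlim i hi (eps/2)) as [K1 HK1]; [lra|].
  assert (HI1 : 1 <= INR I) by (apply (le_INR 1); auto).
  destruct (archimed_cor1 (eps / (2 * INR I))) as [M [HM1 HM2]].
  { apply Rdiv_lt_0_compat; lra. }
  exists (max (S (N (S K1))) M). intros n Hn.
  destruct (kof_spec N hN0 hNinc n) as [A [B C]]; [lia|].
  destruct (kof N n) as [|k'] eqn:Ek; [lia|].
  replace (S k' - 1)%nat with k' in B by lia.
  assert (Kk : (S K1 <= k')%nat).
  { destruct (le_lt_dec (S K1) k'); auto.
    assert (N (S k') <= N (S K1))%nat by (apply Nle; auto; lia). lia. }
  set (t := (n - N k')%nat).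
  assert (En : n = (N k' + t)%nat) by (unfold t; lia).
  assert (Ht : (t <= N (S k') - N k')%nat) by (unfold t; lia).
  assert (Hbd := blockbound I N Ni hI hN0 hNinc hNi0 hNimon hsum k' t i Ht hi).
  rewrite <- En in Hbd.
  assert (Er : rik N Ni i (S k') = (INR (Ni i (S k')) - INR (Ni i k')) / (INR (N (S k')) - INR (N k'))).
  { unfold rik. replace (S k' - 1)%nat with k' by lia. reflexivity. }
  rewrite Er in Hbd.
  assert (Hb0 : 0 < INR (N k')).
  { assert (N 0 < N k')%nat by (apply Nlt; auto; lia). rewrite hN0 in H. apply lt_INR in H. simpl in H. lra. }
  assert (HT : INR (N k') < INR (N (S k'))) by (apply lt_INR; auto).
  assert (Ent : INR n = INR (N k') + INR t) by (rewrite En, plus_INR; reflexivity).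
  assert (Htt : 0 <= INR t <= INR (N (S k')) - INR (N k')).
  { split. apply pos_INR. rewrite <- minus_INR by (specialize (hNinc k'); lia). apply le_INR; auto. }
  unfold R_dist. rewrite Ent. replace eps with (eps/2 + eps/2) by field.
  apply (interp (INR (Ni i k')) (INR (Ni i (S k'))) (INR (N k'))
           (INR (N (S k')) - INR (N k')) (INR t) (INR (nu I N Ni n i)) (q i) (eps/2) (INR I) (eps/2)).
  - auto.
  - lra.
  - auto.
  - apply HK1. lia.
  - replace (INR (N k') + (INR (N (S k')) - INR (N k'))) with (INR (N (S k'))) by ring.
    apply HK1. lia.
  - auto.
  - rewrite <- Ent.
    assert (HMn : INR M <= INR n) by (apply le_INR; lia).
    assert (HM0 : 0 < INR M) by (apply lt_INR in HM2; simpl in HM2; lra).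
    assert (/ INR n <= / INR M) by (apply Rinv_le_contravar; auto).
    unfold Rdiv. 
    apply Rle_lt_trans with (INR I * / INR M).
    + apply Rmult_le_compat_l; lra.
    + apply (Rmult_lt_compat_l (INR I)) in HM1; [|lra].
      replace (INR I * (eps / (2 * INR I))) with (eps * /2) in HM1 by (field; lra). lra.
Qed.
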